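(* Let $\lambda>0$ and $\gamma>0$. Let $\mathcal{F}_p^\lambda(r)=\{F_\lambda(x):x\in B_p(r)\}$. Let $$B_p^\gamma(r)=\{x\in B_p(r):\|x(\xi)\|\le\gamma\text{ for every }\xi\in\Omega\},$$ and let $\mathcal{F}_p^{\lambda,\gamma}(r)=\{F_\lambda(x):x\in B_p^\gamma(r)\}$. Then $$h_q\big(\mathcal{F}_p^\lambda(r),\mathcal{F}_p^{\lambda,\gamma}(r)\big)\le\frac{2r^p[\mu(\Omega)]^{1/q}M(\lambda)}{\gamma^{p-1}}.$$
   Context: Let $k,m,n\ge 1$ be integers and let $\Omega\subset\mathbb{R}^k$ be a compact set. Let $\mu$ denote Lebesgue measure. Let $p>1$, let $q$ satisfy $1/p+1/q=1$, and let $r>0$. $\|\cdot\|$ denotes the Euclidean norm on vectors and the Euclidean (Frobenius) norm on $m\times n$ matrices. $L_p(\Omega;\mathbb{R}^n)$ is the space of Lebesgue measurable $x:\Omega\to\mathbb{R}^n$ with $\|x\|_p=(\int_\Omega\|x(s)\|^p\,ds)^{1/p}<\infty$, and $B_p(r)=\{x\in L_p(\Omega;\mathbb{R}^n):\|x\|_p\le r\}$. $K_\lambda:\Omega\times\Omega\to\mathbb{R}^{m\times n}$ is a continuous function. Set $F_\lambda(x)(\xi)=\int_\Omega K_\lambda(\xi,s)x(s)\,ds$ and $M(\lambda)=\max\{\|K_\lambda(\xi,s)\|:(\xi,s)\in\Omega\times\Omega\}$. $h_q(U,V)=\max\{\sup_{u\in U}\inf_{v\in V}\|u-v\|_q,\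 \sup_{v\in V}\inf_{u\in U}\|u-v\|_q\}$ is the Hausdorff distance in $L_q(\Omega;\mathbb{R}^m)$. *)

(* Defs.v *)
From HB Require Import structures.
From mathcomp Require Import all_boot all_order all_algebra.
From mathcomp Require Import all_classical all_reals all_analysis.
Set Implicit Arguments. Unset Strict Implicit. Unset Printing Implicit Defensive.
Import Order.TTheory GRing.Theory Num.Theory.
Import numFieldNormedType.Exports.
Local Open Scope classical_set_scope.
Local Open Scope ring_scope.

(* Euclidean (Frobenius) norm of a real matrix; for column vectors
   'cV_n = 'M_(n,1) this is the Euclidean norm of R^n. *)
Definition fro (R : realType) (a b : nat) (A : 'M[R]_(a, b)) : R :=
  Num.sqrt (\sum_(i < a) \sum_(j < b) A i j ^+ 2).

Definition Rk (R : realType) (k : nat) := g_sigma_algebraType (@open 'rV[R]_k).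

(* mu is Lebesgue measure on the Borel sets of R^k: the measure of every
   half-open box is the product of its side lengths (this determines the
   measure uniquely on Borel sets). *)
Definition is_lebesgue_Rk (R : realType) (k : nat)
    (mu : {measure set (Rk R k) -> \bar R}) : Prop :=
  forall a b : 'rV[R]_k, (forall i, a 0 i <= b 0 i) ->
    mu ([set x : 'rV[R]_k | forall i, a 0 i <= x 0 i < b 0 i] : set (Rk R k))
    = (\prod_(i < k) (b 0 i - a 0 i))%:E.

Definition meas_on (R : realType) (k n : nat) (Om : set 'rV[R]_k)
    (x : 'rV[R]_k -> 'cV[R]_n) : Prop :=
  forall i : 'I_n, measurable_fun (Om : set (Rk R k)) (fun s => x s i 0).

Definition Lpnorm (R : realType) (k n : nat) (mu : {measure set (Rk R k) -> \bar R})
    (Om : set 'rV[R]_k) (p : R) (x : 'rV[R]_k -> 'cV[R]_n) : \bar R :=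
  poweR (\int[mu]_(s in (Om : set (Rk R k))) ((fro (x s)) `^ p)%:E) p^-1.

Definition Bp (R : realType) (k n : nat) (mu : {measure set (Rk R k) -> \bar R})
    (Om : set 'rV[R]_k) (p r : R) : set ('rV[R]_k -> 'cV[R]_n) :=
  [set x | meas_on Om x /\ (Lpnorm mu Om p x <= r%:E)%E].

Definition Bpg (R : realType) (k n : nat) (mu : {measure set (Rk R k) -> \bar R})
    (Om : set 'rV[R]_k) (p r g : R) : set ('rV[R]_k -> 'cV[R]_n) :=
  [set x | Bp mu Om p r x /\ forall xi, Om xi -> fro (x xi) <= g].

Definition Fop (R : realType) (k m n : nat) (mu : {measure set (Rk R k) -> \bar R})
    (Om : set 'rV[R]_k) (K : 'rV[R]_k -> 'rV[R]_k -> 'M[R]_(m, n))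
    (x : 'rV[R]_k -> 'cV[R]_n) : 'rV[R]_k -> 'cV[R]_m :=
  fun xi => \col_(i < m)
    (\int[mu]_(s in (Om : set (Rk R k))) ((K xi s *m x s) i 0)).

(* M = max of ||K(xi,s)|| over Omega x Omega (a sup, attained when Omega
   is nonempty by compactness and continuity). *)
Definition Mmax (R : realType) (k m n : nat) (Om : set 'rV[R]_k)
    (K : 'rV[R]_k -> 'rV[R]_k -> 'M[R]_(m, n)) : R :=
  sup [set fro (K xs.1 xs.2) | xs in [set xs | Om xs.1 /\ Om xs.2]].

Definition hausdorff_q (R : realType) (k m : nat) (mu : {measure set (Rk R k) -> \bar R})
    (Om : set 'rV[R]_k) (q : R) (U V : set ('rV[R]_k -> 'cV[R]_m)) : \bar R :=
  maxe
    (ereal_sup [set ereal_inf [set Lpnorm mu Om q (fun s => u s - v s) | v in V] | u in U])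
    (ereal_sup [set ereal_inf [set Lpnorm mu Om q (fun s => u s - v s) | u in U] | v in V]).

(* Main.v *)
Require Import Defs.
From HB Require Import structures.
From mathcomp Require Import all_boot all_order all_algebra.
From mathcomp Require Import all_classical all_reals all_analysis.
From mathcomp Require Import ring lra measurable_realfun.
Import Order.TTheory GRing.Theory Num.Theory.
Import numFieldNormedType.Exports.
Set Implicit Arguments. Unset Strict Implicit. Unset Printing Implicit Defensive.
Local Open Scope classical_set_scope.
Local Open Scope ring_scope.

Lemma entry_le (R : realType) m n (A : 'M[R]_(m, n)) i j : `|A i j| <= `|A|.
Proof.
have -> : `|A| = mx_norm A by [].
rewrite mx_normrE; exact: (le_bigmax _ (fun ij : 'I_m * 'I_n => `|A ij.1 ij.2|) (i, j)).
Qed.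

Lemma bounded_compact (R : realType) m n (A : set 'M[R]_(m, n)) :
  compact A -> exists c, 0 < c /\ forall x, A x -> forall i j, `|x i j| <= c.
Proof.
move=> /compact_bounded [M [_ HM]]; exists (`|M| + 1); split.
  by rewrite ltr_wpDl.
move=> x Ax i j; have := entry_le x i j; move=> /le_trans; apply.
idtac.
apply: (HM (`|M| + 1)) => //.
by apply: le_lt_trans (real_ler_norm _) _; rewrite ?ltrDl// num_real.
Qed.

Lemma meas_open (R : realType) k (U : set 'rV[R]_k) :
  open U -> measurable (U : set (Rk R k)).
Proof. by move=> oU; apply: sub_sigma_algebra. Qed.

Lemma meas_closed (R : realType) k (U : set 'rV[R]_k) :
  closed U -> measurable (U : set (Rk R k)).
Proof.
move=> cU; rewrite -(setCK U); apply: measurableC; apply: meas_open.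
exact: closed_openC.
Qed.

Lemma meas_compact (R : realType) k (U : set 'rV[R]_k) :
  compact U -> measurable (U : set (Rk R k)).
Proof.
move=> cU; apply: meas_closed; apply: compact_closed => //.
Qed.

Lemma pair_cont (R : realType) k (a : 'rV[R]_k) :
  continuous (fun s : 'rV[R]_k => (a, s)).
Proof.
move=> s.
exact: (@cvg_pair _ _ _ (nbhs s) (nbhs a) (nbhs s) _ _ _ (fun=> a) id (cvg_cst a) cvg_id).
Qed.

Lemma meas_slice (R : realType) k (D : set 'rV[R]_k)
  (g : 'rV[R]_k * 'rV[R]_k -> R) a :
  D a -> measurable (D : set (Rk R k)) -> {within D `*` D, continuous g} ->
  measurable_fun (D : set (Rk R k)) (fun s => g (a, s)).
Proof.
move=> Da mD cg; apply: (measurability _ (measurable_realfun.RGenOpens.measurableE R)).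
move=> _ [_ [b [c ->] <-]].
have /continuousP/(_ _ (@interval_open _ (BRight b) (BLeft c) erefl erefl)) := cg.
move=> /open_subspaceP [V oV VD].
have -> : (D `&` (fun s => g (a, s)) @^-1` `]b, c[%classic) =
  (D `&` ((fun s => (a, s)) @^-1` V) : set (Rk R k)).
  apply/seteqP; split => s [Ds Hs]; split => //.
  - have : ((g @^-1` `]b, c[%classic) `&` (D `*` D)) (a, s) by [].
    by rewrite -VD => -[].
  - have : (V `&` (D `*` D)) (a, s) by [].
    by rewrite VD => -[].
apply: measurableI => //; apply: meas_open.
apply: open_comp oV => s _; exact: pair_cont.
Qed.

Lemma cs_sum (R : realType) (I : finType) (a b : I -> R) :
  \sum_i a i * b i <= Num.sqrt (\sum_i a i ^+ 2) * Num.sqrt (\sum_i b i ^+ 2).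
Proof.
set A := \sum_i a i ^+ 2; set B := \sum_i b i ^+ 2.
have A0 : 0 <= A by apply: sumr_ge0 => i _; exact: sqr_ge0.
have B0 : 0 <= B by apply: sumr_ge0 => i _; exact: sqr_ge0.
have [Ae|Ane] := eqVneq A 0.
  have H := psumr_eq0P (fun i _ => sqr_ge0 (a i)) Ae.
  rewrite big1 ?mulr_ge0 ?sqrtr_ge0 // => i _.
  by have /eqP := H i isT; rewrite sqrf_eq0 => /eqP ->; rewrite mul0r.
have [Be|Bne] := eqVneq B 0.
  have H := psumr_eq0P (fun i _ => sqr_ge0 (b i)) Be.
  rewrite big1 ?mulr_ge0 ?sqrtr_ge0 // => i _.
  by have /eqP := H i isT; rewrite sqrf_eq0 => /eqP ->; rewrite mulr0.
have Ap : 0 < A by rewrite lt_def Ane.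
have Bp : 0 < B by rewrite lt_def Bne.
set sa := Num.sqrt A; set sb := Num.sqrt B.
have sap : 0 < sa by rewrite sqrtr_gt0.
have sbp : 0 < sb by rewrite sqrtr_gt0.
have saK : sa ^+ 2 = A by rewrite sqr_sqrtr.
have sbK : sb ^+ 2 = B by rewrite sqr_sqrtr.
have key : (\sum_i a i * b i) * (2 * sa * sb) <= 2 * (sa * sb) * (sa * sb).
  have -> : 2 * (sa * sb) * (sa * sb) = A * sb ^+ 2 + B * sa ^+ 2.
    by rewrite -saK -sbK; ring.
  rewrite /A /B !mulr_suml -big_split /=; apply: ler_sum => i _.
  have := sqr_ge0 (a i * sb - b i * sa); lra.
have p2 : 0 < 2 * sa * sb by rewrite !mulr_gt0.
rewrite -(ler_pM2r p2); apply: le_trans key _; rewrite le_eqVlt; apply/orP; left; apply/eqP; ring.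
Qed.

Lemma fro_ge0 (R : realType) a b (A : 'M[R]_(a, b)) : 0 <= fro A.
Proof. exact: sqrtr_ge0. Qed.

Lemma fro0 (R : realType) a b : fro (0 : 'M[R]_(a, b)) = 0.
Proof. by rewrite /fro big1 ?sqrtr0 // => i _; rewrite big1 // => j _; rewrite mxE expr0n. Qed.

Lemma fro_pair (R : realType) a b (A : 'M[R]_(a, b)) :
  fro A = Num.sqrt (\sum_(p : 'I_a * 'I_b) A p.1 p.2 ^+ 2).
Proof. by rewrite /fro pair_bigA. Qed.

Lemma fro_cV (R : realType) a (u : 'cV[R]_a) :
  fro u = Num.sqrt (\sum_i u i 0 ^+ 2).
Proof. by rewrite /fro; congr Num.sqrt; apply: eq_bigr => i _; rewrite big_ord1. Qed.

Lemma cs_mx (R : realType) m n (A : 'M[R]_(m, n)) (u : 'cV[R]_m) (w : 'cV[R]_n) :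
  \sum_i u i 0 * (A *m w) i 0 <= fro u * fro A * fro w.
Proof.
have -> : \sum_i u i 0 * (A *m w) i 0 =
   \sum_(p : 'I_m * 'I_n) A p.1 p.2 * (u p.1 0 * w p.2 0).
  rewrite -(pair_bigA _ (fun i j => A i j * (u i 0 * w j 0))) /=.
  apply: eq_bigr => i _; rewrite mxE mulr_sumr.
  by apply: eq_bigr => j _; ring.
apply: le_trans (cs_sum _ _) _.
rewrite -fro_pair.
have -> : \sum_(p : 'I_m * 'I_n) (u p.1 0 * w p.2 0) ^+ 2 =
   (\sum_i u i 0 ^+ 2) * (\sum_j w j 0 ^+ 2).
  rewrite -(pair_bigA _ (fun i j => (u i 0 * w j 0) ^+ 2)) /= mulr_suml; apply: eq_bigr => i _; rewrite mulr_sumr.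
  by apply: eq_bigr => j _; rewrite exprMn.
rewrite sqrtrM; last by apply: sumr_ge0 => i _; exact: sqr_ge0.
by rewrite -!fro_cV; rewrite le_eqVlt; apply/orP; left; apply/eqP; ring.
Qed.

Lemma fro_le_entry (R : realType) a b (B : 'M[R]_(a, b)) c :
  (forall i j, `|B i j| <= c) -> fro B <= Num.sqrt (\sum_(i < a) \sum_(j < b) c ^+ 2).
Proof.
move=> Hc; rewrite /fro ler_sqrt; last by apply: sumr_ge0 => i _; apply: sumr_ge0 => j _; exact: sqr_ge0.
apply: ler_sum => i _; apply: ler_sum => j _.
rewrite -real_normK ?num_real // !expr2; apply: ler_pM => //; exact: normr_ge0.
Qed.

Lemma Mbound (R : realType) k m n (Om : set 'rV[R]_k)
  (G : 'rV[R]_k -> 'rV[R]_k -> 'M[R]_(m, n)) :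
  compact Om ->
  {within [set xs | Om xs.1 /\ Om xs.2], continuous (fun xs => G xs.1 xs.2)} ->
  (forall a s, Om a -> Om s -> fro (G a s) <= Mmax Om G) /\ 0 <= Mmax Om G.
Proof.
move=> cOm cG.
have cOO : compact [set xs : 'rV[R]_k * 'rV[R]_k | Om xs.1 /\ Om xs.2].
  exact: (compact_setX cOm cOm).
have /bounded_compact [c [c0 Hc]] := continuous_compact cG cOO.
have ub : has_ubound [set fro (G xs.1 xs.2) | xs in [set xs | Om xs.1 /\ Om xs.2]].
  exists (Num.sqrt (\sum_(i < m) \sum_(j < n) c ^+ 2)) => _ [xs Hxs <-].
  apply: fro_le_entry => i j; apply: Hc; by exists xs.
have H1 : forall a s, Om a -> Om s -> fro (G a s) <= Mmax Om G.
  move=> a s Oa Os; apply: ub_le_sup => //; by exists (a, s).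
split => //.
case: (pselect (exists a, Om a)) => [[a Oa]|Oe].
  exact: le_trans (fro_ge0 _) (H1 a a Oa Oa).
rewrite /Mmax (_ : [set _ | _ in _] = set0) ?sup0 //.
by apply/seteqP; split => // t [xs [Hx _] _]; case: Oe; exists xs.1.
Qed.

Lemma fin_Om (R : realType) k (mu : {measure set (Rk R k) -> \bar R})
  (Om : set 'rV[R]_k) :
  is_lebesgue_Rk mu -> compact Om -> (mu (Om : set (Rk R k)) < +oo)%E.
Proof.
move=> Hmu cOm.
have [c [c0 Hc]] := bounded_compact cOm.
pose a : 'rV[R]_k := const_mx (- c).
pose b : 'rV[R]_k := const_mx (c + 1).
pose Bx := [set x : 'rV[R]_k | forall i, a 0 i <= x 0 i < b 0 i].
have ab : forall i, a 0 i <= b 0 i by move=> i; rewrite !mxE; lra.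
have mB : measurable (Bx : set (Rk R k)).
  have -> : Bx = \bigcap_(i in [set: 'I_k])
      ((~` [set x : 'rV[R]_k | x 0 i < - c]) `&` [set x | x 0 i < c + 1]).
    apply/seteqP; split => x.
      move=> Hx i _; have := Hx i; rewrite !mxE => /andP[h1 h2]; split => //=.
      by apply/negP; rewrite -leNgt.
    move=> Hx i; have [/= h1 h2] := Hx i Logic.I; rewrite !mxE h2 andbT.
    by rewrite leNgt; apply/negP.
  apply: fin_bigcap_measurable; first exact: finite_finset.
  move=> i _; apply: measurableI; first apply: measurableC.
    apply: meas_open.
    exact: (open_comp (fun x _ => @coord_continuous R 1 k 0 i x) (@open_lt R (- c))).
  apply: meas_open.
  exact: (open_comp (fun x _ => @coord_continuous R 1 k 0 i x) (@open_lt R (c + 1))).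
have sub : Om `<=` Bx.
  move=> x Ox i; have := Hc x Ox 0 i; rewrite !mxE.
  by rewrite ler_norml => /andP[h1 h2]; rewrite h1 /=; lra.
have E : mu (Bx : set (Rk R k)) = (\prod_(i < k) (b 0 i - a 0 i))%:E by exact: Hmu.
have le1 : (mu (Om : set (Rk R k)) <= mu (Bx : set (Rk R k)))%E.
  by apply: le_measure => //; rewrite inE //; exact: meas_compact.
rewrite E in le1; exact: le_lt_trans le1 (ltry _).
Qed.

Lemma my_le_int d (T : measurableType d) (R : realType) (mu : {measure set T -> \bar R})
  (D : set T) (f g : T -> \bar R) :
  (forall x, D x -> (0 <= f x)%E) -> (forall x, D x -> (f x <= g x)%E) ->
  (\int[mu]_(x in D) f x <= \int[mu]_(x in D) g x)%E.
Proof.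
move=> f0 fg.
have g0 : forall x, D x -> (0 <= g x)%E by move=> x Dx; exact: le_trans (f0 x Dx) (fg x Dx).
rewrite (ge0_integralE mu f0) (ge0_integralE mu g0) /=.
apply: ereal_sup_le => _ [h hf <-]; exists h => //= t.
apply: le_trans (hf t) _; rewrite /patch; case: ifP => // /set_mem; exact: fg.
Qed.

Lemma entry_bound (R : realType) m n (A : 'M[R]_(m, n)) (v : 'cV[R]_n) i :
  `|(A *m v) i 0| <= fro A * fro v.
Proof.
pose sg : R := if 0 <= (A *m v) i 0 then 1 else -1.
pose u : 'cV[R]_m := \col_l ((l == i)%:R * sg).
have sg2 : sg ^+ 2 = 1 by rewrite /sg; case: ifP => _; rewrite ?expr1n ?sqrrN ?expr1n.
have fu : fro u = 1.
  rewrite fro_cV (bigD1 i) //= big1 ?addr0; last first.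
    by move=> l /negbTE li; rewrite mxE li mul0r expr0n.
  by rewrite mxE eqxx mul1r sg2 sqrtr1.
have := cs_mx A u v; rewrite fu mul1r; apply: le_trans.
rewrite (bigD1 i) //= big1 ?addr0; last first.
  by move=> l /negbTE li; rewrite mxE li mul0r mul0r.
rewrite /u [X in _ <= X * _]mxE eqxx mul1r /sg; case: ifP => h.
  by rewrite mul1r ger0_norm.
by rewrite mulN1r ltr0_norm // ltNge h.
Qed.

Lemma int_bound d (T : measurableType d) (R : realType) (mu : {measure set T -> \bar R})
  (D : set T) (f : T -> R) c :
  measurable D -> (mu D < +oo)%E -> measurable_fun D f ->
  (forall s, D s -> `|f s| <= c) -> mu.-integrable D (EFin \o f).
Proof.
move=> mD fD mf Hf; apply/integrableP; split; first exact/measurable_EFinP.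
apply: (@le_lt_trans _ _ (\int[mu]_(x in D) (cst c%:E) x)%E).
  apply: my_le_int => x Dx //=; rewrite lee_fin; exact: Hf.
rewrite integral_cst //.
have fin : (mu D \is a fin_num)%E by rewrite ge0_fin_numE // measure_ge0.
by rewrite -(fineK fin) -EFinM ltry.
Qed.

Lemma Rint_sum d (T : measurableType d) (R : realType) (mu : {measure set T -> \bar R})
  (D : set T) (I : Type) (s : seq I) (h : I -> T -> R) :
  measurable D -> (forall i, mu.-integrable D (EFin \o h i)) ->
  \sum_(i <- s) \int[mu]_(x in D) h i x = \int[mu]_(x in D) (\sum_(i <- s) h i x).
Proof.
move=> mD ih; elim: s => [|i s IH].
  rewrite big_nil; under eq_Rintegral do rewrite big_nil.
  by rewrite (Rintegral_cst mu mD) mul0r.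
rewrite big_cons IH; under [X in _ = X]eq_Rintegral do rewrite big_cons.
rewrite RintegralD //.
have -> : (EFin \o (fun x => \sum_(i0 <- s) h i0 x)) = (fun x => \sum_(i0 <- s) (EFin \o h i0) x)%E.
  by apply/funext => x /=; rewrite sumEFin.
by apply: (@integrable_sum _ _ _ mu D mD) => j _; exact: ih.
Qed.

Lemma intZ d (T : measurableType d) (R : realType) (mu : {measure set T -> \bar R})
  (D : set T) (f : T -> R) c :
  measurable D -> mu.-integrable D (EFin \o f) -> mu.-integrable D (EFin \o (fun s => c * f s)).
Proof.
move=> mD H; have := integrableZl mD c H; by apply: eq_integrable => // s _.
Qed.

Lemma core (R : realType) k m n (mu : {measure set (Rk R k) -> \bar R})
  (Om : set 'rV[R]_k) (p r gam M : R)
  (G : 'rV[R]_k -> 'rV[R]_k -> 'M[R]_(m, n)) (x : 'rV[R]_k -> 'cV[R]_n) :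
  measurable (Om : set (Rk R k)) -> (mu (Om : set (Rk R k)) < +oo)%E ->
  1 < p -> 0 < gam ->
  (forall a s, Om a -> Om s -> fro (G a s) <= M) -> 0 <= M ->
  (forall a, Om a -> forall i j, measurable_fun (Om : set (Rk R k)) (fun s => G a s i j)) ->
  Bp mu Om p r x ->
  exists y, Bpg mu Om p r gam y /\
    forall a, Om a -> fro (Fop mu Om G x a - Fop mu Om G y a) <= M * r `^ p / gam `^ (p - 1).
Proof.
move=> mOm fOm p1 g0 HG M0 mG [mx Hx].
have p0 : 0 < p by lra.
pose sm := fun s => (\sum_i x s i 0 ^+ 2 <= gam ^+ 2).
pose y := fun s => if sm s then x s else 0.
pose w := fun s => if sm s then 0 else x s.
have xyw : forall s, x s = y s + w s.
  by move=> s; rewrite /y /w; case: (sm s); rewrite ?addr0 ?add0r.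
have mxi : forall i, measurable_fun (Om : set (Rk R k)) (fun s => x s i 0) := mx.
have msq : measurable_fun (Om : set (Rk R k)) (fun s => \sum_i x s i 0 ^+ 2).
  by apply: measurable_sum => i; exact: measurable_funX.
have msm : measurable_fun (Om : set (Rk R k)) sm.
  exact: measurable_fun_ler msq (measurable_cst _).
have mfx : measurable_fun (Om : set (Rk R k)) (fun s => fro (x s)).
  under eq_fun do rewrite fro_cV.
  apply: measurableT_comp msq => //.
  exact: continuous_measurable_fun (@sqrt_continuous R).
have mfxp : measurable_fun (Om : set (Rk R k)) (fun s => fro (x s) `^ p).
  exact: measurableT_comp (measurable_powR p) mfx.
have myi : forall i, measurable_fun (Om : set (Rk R k)) (fun s => y s i 0).
  move=> i; have -> : (fun s => y s i 0) = (fun s => if sm s then x s i 0 else 0).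
    by apply/funext => s; rewrite /y; case: (sm s); rewrite ?mxE.
  apply: measurable_fun_if => //.
  by apply: measurable_funS (mxi i) => // s [].
have mwi : forall i, measurable_fun (Om : set (Rk R k)) (fun s => w s i 0).
  move=> i; have -> : (fun s => w s i 0) = (fun s => if sm s then 0 else x s i 0).
    by apply/funext => s; rewrite /w; case: (sm s); rewrite ?mxE.
  apply: measurable_fun_if => //.
  by apply: measurable_funS (mxi i) => // s [].
have gp : 0 < gam `^ (p - 1) by apply: powR_gt0.
have fy_le : forall s, fro (y s) <= gam.
  move=> s; rewrite /y; case: ifP => h; last by rewrite fro0 ltW.
  rewrite fro_cV -(ger0_norm (ltW g0)) -sqrtr_sqr ler_sqrt //; exact: sqr_ge0.
have fy_x : forall s, fro (y s) <= fro (x s).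
  by move=> s; rewrite /y; case: ifP => h //; rewrite fro0 fro_ge0.
have fw_le : forall s, fro (w s) <= fro (x s) `^ p / gam `^ (p - 1).
  move=> s; rewrite /w; case: ifP => h.
    by rewrite fro0 divr_ge0 // ?powR_ge0 // ltW.
  have hlt : gam ^+ 2 < \sum_i x s i 0 ^+ 2 by rewrite ltNge; move: h; rewrite /sm => ->.
  have gx : gam < fro (x s).
    rewrite fro_cV -(ger0_norm (ltW g0)) -sqrtr_sqr ltr_sqrt //.
    exact: lt_trans (exprn_gt0 _ g0) hlt.
  rewrite ler_pdivlMr // -(mulr_powRB1 (fro_ge0 (x s)) p0).
  apply: ler_wpM2l; first exact: fro_ge0.
  apply: ge0_ler_powR; rewrite ?nnegrE ?subr_ge0 ?ltW //.
  exact: lt_trans g0 gx.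
have pV0 : p^-1 != 0 by rewrite invr_eq0 gt_eqF.
set Ix := (\int[mu]_(s in (Om : set (Rk R k))) ((fro (x s)) `^ p)%:E)%E.
have Ix0 : (0 <= Ix)%E by apply: integral_ge0 => s _; rewrite lee_fin powR_ge0.
have Hx' : (Ix `^ p^-1 <= r%:E)%E by [].
have [I IE] : exists I, Ix = I%:E.
  move: Ix0 Hx'; case: Ix => [I| |] //; first by exists I.
  by rewrite poweRyr.
have I0 : 0 <= I by rewrite -lee_fin -IE.
have Ir : I <= r `^ p.
  move: Hx'; rewrite IE poweR_EFin lee_fin => Hr.
  have r0 : 0 <= r by apply: le_trans Hr; exact: powR_ge0.
  have := @ge0_ler_powR R p (ltW p0) _ _ (powR_ge0 I p^-1) r0 Hr.
  by rewrite -powRrM mulVf ?gt_eqF // powRr1.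
have intx : mu.-integrable (Om : set (Rk R k)) (EFin \o (fun s => fro (x s) `^ p)).
  apply/integrableP; split; first exact/measurable_EFinP.
  rewrite (_ : (fun s => _) = (fun s => ((fro (x s)) `^ p)%:E)); last first.
    by apply/funext => s; rewrite /comp gee0_abs // lee_fin powR_ge0.
  by rewrite -/Ix IE ltry.
have RIx : \int[mu]_(s in (Om : set (Rk R k))) (fro (x s) `^ p) = I.
  by rewrite /Rintegral -/Ix IE.
have yB : Bpg mu Om p r gam y.
  split; last by move=> xi _; exact: fy_le.
  split; first exact: myi.
  apply: le_trans Hx'; apply: gt0_ler_poweR.
  - by rewrite invr_ge0 ltW.
  - by rewrite in_itv /= leey andbT integral_ge0 // => s _; rewrite lee_fin powR_ge0.
  - by rewrite in_itv /= leey andbT.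
  apply: my_le_int => s _; first by rewrite lee_fin powR_ge0.
  rewrite lee_fin; apply: ge0_ler_powR; rewrite ?nnegrE ?fro_ge0 //.
  exact: ltW.
exists y; split => // a Oa.
have hxyw : forall i s, (G a s *m x s) i 0 = (G a s *m y s) i 0 + (G a s *m w s) i 0.
  by move=> i s; rewrite xyw mulmxDr mxE.
have mprod : forall v : 'rV[R]_k -> 'cV[R]_n,
    (forall j, measurable_fun (Om : set (Rk R k)) (fun s => v s j 0)) ->
    forall i, measurable_fun (Om : set (Rk R k)) (fun s => (G a s *m v s) i 0).
  move=> v mv i.
  have -> : (fun s => (G a s *m v s) i 0) = (fun s => \sum_j G a s i j * v s j 0).
    by apply/funext => s; rewrite mxE.
  apply: measurable_sum => j; apply: measurable_funM; [exact: mG | exact: mv].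
have inty : forall i, mu.-integrable (Om : set (Rk R k)) (EFin \o (fun s => (G a s *m y s) i 0)).
  move=> i; apply: (@int_bound _ _ _ _ _ _ (M * gam)) => //; first exact: mprod.
  move=> s Os; apply: le_trans (entry_bound _ _ _) _.
  by apply: ler_pM; [exact: fro_ge0 | exact: fro_ge0 | exact: HG | exact: fy_le].
set C := M / gam `^ (p - 1).
have C0 : 0 <= C by rewrite divr_ge0 // ltW.
have intw : forall i, mu.-integrable (Om : set (Rk R k)) (EFin \o (fun s => (G a s *m w s) i 0)).
  move=> i; apply: le_integrable (intZ C mOm intx) => //.
    apply/measurable_EFinP; apply: mprod => j; exact: mwi.
  move=> s Os; rewrite /comp !abse_EFin lee_fin (ger0_norm (mulr_ge0 C0 (powR_ge0 _ _))).
  apply: le_trans (entry_bound _ _ _) _.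
  rewrite /C mulrAC -mulrA; apply: ler_pM; [exact: fro_ge0 | exact: fro_ge0 | exact: HG | exact: fw_le].
have Fd : Fop mu Om G x a - Fop mu Om G y a =
    \col_i \int[mu]_(s in (Om : set (Rk R k))) ((G a s *m w s) i 0).
  apply/matrixP => i j; rewrite !mxE.
  under eq_Rintegral do rewrite hxyw.
  by rewrite RintegralD //; lra.
rewrite Fd; set v := \col_i _.
have vi : forall i, v i 0 = \int[mu]_(s in (Om : set (Rk R k))) ((G a s *m w s) i 0).
  by move=> i; rewrite /v mxE.
have intg : forall i, mu.-integrable (Om : set (Rk R k))
    (EFin \o (fun s => v i 0 * (G a s *m w s) i 0)).
  by move=> i; apply: intZ => //; exact: intw.
have sq : fro v ^+ 2 = \sum_i v i 0 * v i 0.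
  rewrite fro_cV sqr_sqrtr; last by apply: sumr_ge0 => i _; exact: sqr_ge0.
  by apply: eq_bigr => i _; rewrite expr2.
have key : fro v ^+ 2 <= fro v * (C * r `^ p).
  rewrite sq.
  have -> : \sum_i v i 0 * v i 0 =
      \int[mu]_(s in (Om : set (Rk R k))) (\sum_i v i 0 * (G a s *m w s) i 0).
    rewrite -Rint_sum //; apply: eq_bigr => i _.
    by rewrite {2}vi RintegralZl //; exact: intw.
  apply: le_trans (_ : \int[mu]_(s in (Om : set (Rk R k))) (fro v * C * fro (x s) `^ p) <= _).
    apply: le_Rintegral => //.
    - have -> : (EFin \o (fun s => \sum_i v i 0 * (G a s *m w s) i 0)) =
          (fun s => \sum_(i <- index_enum 'I_m) (EFin \o (fun s => v i 0 * (G a s *m w s) i 0)) s).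
        by apply/funext => s /=; rewrite sumEFin.
      by apply: integrable_sum => // i _; exact: intg.
    - by apply: intZ.
    move=> s Os; apply: le_trans (cs_mx _ _ _) _.
    rewrite -!mulrA; apply: ler_wpM2l; first exact: fro_ge0.
    rewrite [_^-1 * _]mulrC; apply: ler_pM; [exact: fro_ge0 | exact: fro_ge0 | exact: HG | exact: fw_le].
  rewrite RintegralZl // RIx -mulrA; apply: ler_wpM2l; first exact: fro_ge0.
  by apply: ler_wpM2l.
have fv0 := fro_ge0 v.
have : fro v <= C * r `^ p.
  have [e|ne] := eqVneq (fro v) 0.
    by rewrite e mulr_ge0 // powR_ge0.
  have fvp : 0 < fro v by rewrite lt_def ne.
  by rewrite -(ler_pM2l fvp) -expr2.
by rewrite /C mulrAC.
Qed.

Unset Implicit Arguments.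

Theorem mainTheorem4 (R : realType) (k m n : nat)
    (mu : {measure set (Rk R k) -> \bar R}) (Om : set 'rV[R]_k)
    (p q r : R) (K : R -> 'rV[R]_k -> 'rV[R]_k -> 'M[R]_(m, n)) (lam gam : R) :
  (0 < k)%N -> (0 < m)%N -> (0 < n)%N ->
  is_lebesgue_Rk mu -> compact Om ->
  1 < p -> p^-1 + q^-1 = 1 -> 0 < r ->
  {within [set xs | Om xs.1 /\ Om xs.2], continuous (fun xs => K lam xs.1 xs.2)} ->
  0 < lam -> 0 < gam ->
  (hausdorff_q mu Om q
     [set Fop mu Om (K lam) x | x in Bp mu Om p r]
     [set Fop mu Om (K lam) x | x in Bpg mu Om p r gam]
   <= (2 * r `^ p * (fine (mu (Om : set (Rk R k)))) `^ q^-1 * Mmax Om (K lam)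
        / gam `^ (p - 1))%:E)%E.
Proof.
move=> k0 m0 n0 Hmu cOm p1 pq r0 cK lam0 gam0.
have mOm := meas_compact cOm.
have fOm := fin_Om Hmu cOm.
have [HG M0] := Mbound cOm cK.
set M := Mmax Om (K lam).
have mG : forall a, Om a -> forall i j,
    measurable_fun (Om : set (Rk R k)) (fun s => K lam a s i j).
  move=> a Oa i j.
  apply: (@meas_slice R k Om (fun xs => K lam xs.1 xs.2 i j) a Oa mOm).
  move=> xs; exact: (continuous_comp (cK xs) (@coord_continuous R m n i j _)).
have p0 : 0 < p by lra.
have qV : q^-1 = 1 - p^-1 by lra.
have qV0 : 0 < q^-1.
  rewrite qV subr_gt0 invf_lt1 //.
have q0 : 0 < q by rewrite -invr_gt0.
have qn0 : q != 0 by rewrite gt_eqF.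
set c := M * r `^ p / gam `^ (p - 1).
have c0 : 0 <= c by rewrite divr_ge0 ?powR_ge0 // mulr_ge0 // powR_ge0.
set muf := fine (mu (Om : set (Rk R k))).
have muf0 : 0 <= muf by rewrite fine_ge0 // measure_ge0.
have muE : mu (Om : set (Rk R k)) = muf%:E.
  by rewrite /muf fineK // ge0_fin_numE // measure_ge0.
set B := (2 * r `^ p * muf `^ q^-1 * M / gam `^ (p - 1)).
have cB : c * muf `^ q^-1 <= B.
  have -> : B = 2 * (c * muf `^ q^-1).
    by rewrite /B /c; ring.
  have : 0 <= c * muf `^ q^-1 by rewrite mulr_ge0 // powR_ge0.
  lra.
have B0 : 0 <= B by apply: le_trans cB; rewrite mulr_ge0 // powR_ge0.
have dist : forall u v : 'rV[R]_k -> 'cV[R]_m,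
    (forall a, Om a -> fro (u a - v a) <= c) ->
    (Lpnorm mu Om q (fun s => (u s - v s)%R) <= B%:E)%E.
  move=> u v Huv; apply: le_trans _ (_ : (c * muf `^ q^-1)%:E <= B%:E)%E; last by rewrite lee_fin.
  rewrite /Lpnorm.
  apply: le_trans (_ : (((c `^ q) * muf)%:E `^ q^-1 <= _)%E).
    apply: gt0_ler_poweR; first exact: ltW.
    - by rewrite in_itv /= leey andbT integral_ge0 // => s _; rewrite lee_fin powR_ge0.
    - by rewrite in_itv /= leey andbT lee_fin mulr_ge0 // powR_ge0.
    apply: le_trans (_ : (\int[mu]_(s in (Om : set (Rk R k))) (cst (c `^ q)%:E) s <= _)%E).
      apply: my_le_int => s Os; first by rewrite lee_fin powR_ge0.
      rewrite lee_fin /=; apply: ge0_ler_powR; rewrite ?nnegrE ?fro_ge0 //; last exact: Huv.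
      exact: ltW.
    by rewrite integral_cst // muE.
  rewrite poweR_EFin lee_fin powRM ?powR_ge0 // -powRrM mulfV // powRr1 //.
rewrite /hausdorff_q ge_max; apply/andP; split.
  apply: ge_ereal_sup => _ [u [x xB <-] <-].
  have [y [yB Hy]] := core mOm fOm p1 gam0 HG M0 mG xB.
  apply: le_trans (ereal_inf_lbound _) (dist _ _ Hy).
  by exists (Fop mu Om (K lam) y) => //; exists y.
apply: ge_ereal_sup => _ [v [y yB <-] <-].
apply: le_trans (ereal_inf_lbound _) _.
  by exists (Fop mu Om (K lam) y) => //; exists y => //; case: yB.
rewrite /Lpnorm.
under eq_integral do rewrite subrr fro0 powR0 //.
by rewrite integral0 poweR0r ?invr_eq0 // lee_fin.
Qed.
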